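(* Let $c,d\in\mathbb{N}$, $I=\mathbb{N}^d\times[c]$, $I_n=[n]^d\times[c]$, let $L\subseteq\mathbb{Z}^{(I)}$ be a lattice and $L_n=L\cap\mathbb{Z}^{(I_n)}$ for $n\ge1$. (i) If for every $n\ge1$, $\mathcal{B}_n\subseteq L_n$ is a generating set (respectively Markov basis, universal Gröbner basis, Graver basis) of $L_n$, then $\mathcal{B}=\bigcup_{n\ge1}\mathcal{B}_n$ is a generating set (respectively Markov basis, universal Gröbner basis, Graver basis) of $L$. Also, if $\prec$ is a term order on $\mathbb{Z}_{\ge0}^{(I)}$ and each $\mathcal{B}_n$ is a Gröbner basis of $L_n$ with respect to the restriction of $\prec$ to $\mathbb{Z}_{\ge0}^{(I_n)}$, then $\mathcal{B}$ is a Gröbner basis of $L$ with respect to $\prec$. (ii) If $\mathcal{G}$ is the Graver basis of $L$, then $\mathcal{G}\cap\mathbb{Z}^{(I_n)}$ is the Graver basis of $L_n$ for all $n\ge1$.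
   Context: $\mathbb{N}=\{1,2,\dots\}$. For a set $J$, $\mathbb{Z}^{(J)}$ is the free abelian group with basis $J$, $\mathbb{Z}_{\ge0}^{(J)}$ its nonnegative vectors; $\mathbb{Z}^{(I_n)}\subseteq\mathbb{Z}^{(I)}$ by extension by zero; a lattice is a subgroup. $\mathbf{u}\sqsubseteq\mathbf{v}$ iff $u_jv_j\ge0$ and $|u_j|\le|v_j|$ for all $j$. A term order is an additive well-ordering of $\mathbb{Z}_{\ge0}^{(J)}$. For a lattice $L\subseteq\mathbb{Z}^{(J)}$ and $\mathbf{u}\in\mathbb{Z}_{\ge0}^{(J)}$, $F_L(\mathbf{u})=\{\mathbf{v}\in\mathbb{Z}_{\ge0}^{(J)}\mid\mathbf{u}-\mathbf{v}\in L\}$. For $\mathcal{B}\subseteq L$: generating set = generates $L$ as a group; Markov basis = for every $\mathbf{u}$ the graph on $F_L(\mathbf{u})$ with edges $\{\mathbf{v},\mathbf{w}\}$ for $\mathbf{v}-\mathbf{w}\in\pm\mathcal{B}$ is connected; Gröbner basis w.r.t. $\prec$ = for every $\mathbf{u}$ there is a directed path from $\mathbf{u}$ to the $\prec$-minimal element of $F_L(\mathbf{u})$ in the graph on $F_L(\mathbf{u})$ with an edge from $\mathbf{v}$ to $\mathbf{w}$ whenever $\mathbf{v}-\mathbf{w}\in\pm\mathcal{B}$ and $\mathbf{w}\prec\mathbf{v}$; universal Gröbner basis = Gröbner basis w.r.t. every term order. The Graver basis is the set of $\sqsubseteq$-minimal elements of $L\setminus\{\mathbf{0}\}$. *)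

(* Defs.v *)
From mathcomp Require Import all_boot all_order all_algebra.
From Stdlib Require Import Relations.Relation_Operators.
Set Implicit Arguments. Unset Strict Implicit. Unset Printing Implicit Defensive.
Import Order.TTheory GRing.Theory Num.Theory.
Local Open Scope ring_scope.

(* Ambient index type: (nat^d) x [c]; the actual index set
   I = N^d x [c] (N = {1,2,...}) is the predicate [Itop] below, and
   I_n = [n]^d x [c] is the predicate [In n]. [c] is represented by 'I_c. *)
Definition idx (d c : nat) := (d.-tuple nat * 'I_c)%type.

Definition Itop {d c : nat} (i : idx d c) : bool :=
  all (fun x => (0 < x)%N) (tval i.1).
Definition In {d c : nat} (n : nat) (i : idx d c) : bool :=
  all (fun x => (0 < x <= n)%N) (tval i.1).

Definition vec d c := idx d c -> int.
Definition vzero {d c} : vec d c := fun _ => 0.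
Definition vsub {d c} (u v : vec d c) : vec d c := fun j => u j - v j.
Definition vadd {d c} (u v : vec d c) : vec d c := fun j => u j + v j.
Definition nonzero {d c} (v : vec d c) : Prop := exists j, v j != 0.

Definition inZJ {d c} (J : pred (idx d c)) (v : vec d c) : Prop :=
  (exists s : seq (idx d c), forall j, v j != 0 -> j \in s) /\
  (forall j, v j != 0 -> J j).

Definition nonnegJ {d c} (J : pred (idx d c)) (v : vec d c) : Prop :=
  inZJ J v /\ forall j, 0 <= v j.

Definition is_lattice {d c} (J : pred (idx d c)) (L : vec d c -> Prop) : Prop :=
  L vzero /\ (forall u v, L u -> L v -> L (vsub u v)) /\ (forall v, L v -> inZJ J v).

Definition Lcap {d c} (L : vec d c -> Prop) (n : nat) : vec d c -> Prop :=
  fun v => L v /\ inZJ (In n) v.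

Inductive zspan {d c} (B : vec d c -> Prop) : vec d c -> Prop :=
| zspan0 : zspan B vzero
| zspan_add v b : zspan B v -> B b -> zspan B (vadd v b)
| zspan_sub v b : zspan B v -> B b -> zspan B (vsub v b).

Definition generating_set {d c} (L B : vec d c -> Prop) : Prop :=
  (forall b, B b -> L b) /\ (forall v, L v -> zspan B v).

Definition fiber {d c} (J : pred (idx d c)) (L : vec d c -> Prop) (u : vec d c)
  : vec d c -> Prop := fun v => nonnegJ J v /\ L (vsub u v).

Definition pmB {d c} (B : vec d c -> Prop) (v w : vec d c) : Prop :=
  B (vsub v w) \/ B (vsub w v).

Definition markov_basis {d c} (J : pred (idx d c)) (L B : vec d c -> Prop) : Prop :=
  (forall b, B b -> L b) /\
  forall u, nonnegJ J u -> forall v w, fiber J L u v -> fiber J L u w ->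
    clos_refl_trans (vec d c)
      (fun x y => fiber J L u x /\ fiber J L u y /\ pmB B x y) v w.

Definition term_order {d c} (J : pred (idx d c)) (prec : vec d c -> vec d c -> Prop)
  : Prop :=
  (forall u, nonnegJ J u -> ~ prec u u) /\
  (forall u v w, nonnegJ J u -> nonnegJ J v -> nonnegJ J w ->
     prec u v -> prec v w -> prec u w) /\
  (forall u v, nonnegJ J u -> nonnegJ J v -> prec u v \/ u = v \/ prec v u) /\
  well_founded (fun u v => nonnegJ J u /\ nonnegJ J v /\ prec u v) /\
  (forall u v w, nonnegJ J u -> nonnegJ J v -> nonnegJ J w ->
     prec u v -> prec (vadd u w) (vadd v w)).

Definition groebner_basis {d c} (J : pred (idx d c)) (L : vec d c -> Prop)
  (prec : vec d c -> vec d c -> Prop) (B : vec d c -> Prop) : Prop :=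
  (forall b, B b -> L b) /\
  forall u, nonnegJ J u -> forall m, fiber J L u m ->
    (forall v, fiber J L u v -> ~ prec v m) ->
    clos_refl_trans (vec d c)
      (fun x y => fiber J L u x /\ fiber J L u y /\ pmB B x y /\ prec y x) u m.

Definition universal_groebner_basis {d c} (J : pred (idx d c))
  (L B : vec d c -> Prop) : Prop :=
  (forall b, B b -> L b) /\
  forall prec, term_order J prec -> groebner_basis J L prec B.

Definition conf {d c} (u v : vec d c) : Prop :=
  forall j, 0 <= u j * v j /\ `|u j| <= `|v j|.

Definition graver_basis {d c} (L G : vec d c -> Prop) : Prop :=
  forall v, G v <-> (L v /\ nonzero v /\
                     forall u, L u -> nonzero u -> conf u v -> u = v).

Definition bigunion {d c} (Bs : nat -> vec d c -> Prop) : vec d c -> Prop :=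
  fun v => exists n, (0 < n)%N /\ Bs n v.

(* Main.v *)
Require Import Defs.
From mathcomp Require Import all_boot all_order all_algebra.
From Stdlib Require Import Relations.Relation_Operators Wellfounded.Inclusion.
Import Order.TTheory GRing.Theory Num.Theory.
Set Implicit Arguments. Unset Strict Implicit. Unset Printing Implicit Defensive.
Local Open Scope ring_scope.

Section H.
Variables d c : nat.
Implicit Types u v w : vec d c.

Lemma crt_mono (R S : vec d c -> vec d c -> Prop) x y :
  (forall a b, R a b -> S a b) -> clos_refl_trans _ R x y -> clos_refl_trans _ S x y.
Proof.
move=> HRS; elim=> [a b /HRS H|a|a b e _ IH1 _ IH2].
- exact: rt_step.
- exact: rt_refl.
- exact: rt_trans IH1 IH2.
Qed.

Lemma inZJ_mono (J1 J2 : pred (idx d c)) v :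
  (forall j, J1 j -> J2 j) -> inZJ J1 v -> inZJ J2 v.
Proof. by move=> H [Hs HJ]; split=> // j /HJ /H. Qed.

Lemma In_Itop n (j : idx d c) : In n j -> Itop j.
Proof. by move=> /allP H; apply/allP=> x /H /andP[]. Qed.

Lemma In_mono n m (j : idx d c) : (n <= m)%N -> In n j -> In m j.
Proof.
move=> nm /allP H; apply/allP=> x /H /andP[-> xn] /=; exact: leq_trans xn nm.
Qed.

Lemma inZJ_In_mono n m v : (n <= m)%N -> inZJ (In n) v -> inZJ (In m) v.
Proof. move=> nm; apply: inZJ_mono => j; exact: In_mono. Qed.

Lemma inZJ_In_Itop n v : inZJ (In n) v -> inZJ Itop v.
Proof. apply: inZJ_mono => j; exact: In_Itop. Qed.

Lemma nonneg_In_Itop n v : nonnegJ (In n) v -> nonnegJ Itop v.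
Proof. by move=> [H1 H2]; split=> //; apply: inZJ_In_Itop H1. Qed.

Lemma le_foldr (t : seq nat) x : x \in t -> (x <= foldr maxn 0 t)%N.
Proof.
elim: t => //= a t IH; rewrite in_cons => /orP[/eqP->|/IH H].
- exact: leq_maxl.
- exact: leq_trans H (leq_maxr _ _).
Qed.

Lemma bound v : inZJ Itop v -> exists n, (0 < n)%N /\ inZJ (In n) v.
Proof.
move=> [[s Hs] HJ].
pose N := foldr maxn 0 (map (fun j : idx d c => foldr maxn 0 (tval j.1)) s).
exists N.+1; split=> //; split; first by exists s.
move=> j Hj; have /allP Hp := HJ j Hj; apply/allP => x Hx.
rewrite Hp //=; apply: leq_trans _ (leqnSn _).
apply: leq_trans (le_foldr Hx) _; apply: le_foldr.
by apply: map_f; apply: Hs.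
Qed.

Lemma bound2 v w : inZJ Itop v -> inZJ Itop w ->
  exists n, (0 < n)%N /\ inZJ (In n) v /\ inZJ (In n) w.
Proof.
move=> /bound [n1 [n1p H1]] /bound [n2 [n2p H2]].
exists (maxn n1 n2); split; first by apply: leq_trans n1p (leq_maxl _ _).
split; [apply: inZJ_In_mono H1; exact: leq_maxl|apply: inZJ_In_mono H2; exact: leq_maxr].
Qed.

Lemma bound3 u v w : inZJ Itop u -> inZJ Itop v -> inZJ Itop w ->
  exists n, (0 < n)%N /\ inZJ (In n) u /\ inZJ (In n) v /\ inZJ (In n) w.
Proof.
move=> Hu /(bound2 Hu) [n1 [n1p [H1 H2]]] /bound [n2 [n2p H3]].
exists (maxn n1 n2); split; first by apply: leq_trans n1p (leq_maxl _ _).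
split; first by apply: inZJ_In_mono H1; exact: leq_maxl.
split; first by apply: inZJ_In_mono H2; exact: leq_maxl.
by apply: inZJ_In_mono H3; exact: leq_maxr.
Qed.

Lemma inZJ_sub (J : pred (idx d c)) u v : inZJ J u -> inZJ J v -> inZJ J (vsub u v).
Proof.
move=> [[s1 H1] J1] [[s2 H2] J2]; split.
- exists (s1 ++ s2) => j; rewrite /vsub mem_cat.
  case: (eqVneq (u j) 0) => [->|/H1 -> //]; rewrite sub0r oppr_eq0 => /H2 ->.
  by rewrite orbT.
- move=> j; rewrite /vsub; case: (eqVneq (u j) 0) => [->|/J1 //].
  by rewrite sub0r oppr_eq0 => /J2.
Qed.

Lemma conf_inZJ (J : pred (idx d c)) u v : conf u v -> inZJ J v -> inZJ J u.
Proof.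
move=> Hc [[s Hs] HJ].
have K : forall j, u j != 0 -> v j != 0.
  move=> j; apply: contraNN => /eqP v0; have [_ H] := Hc j.
  by move: H; rewrite v0 normr0 normr_le0.
by split; [exists s => j /K /Hs|move=> j /K /HJ].
Qed.

Lemma fiber_up n (L : vec d c -> Prop) u x :
  fiber (In n) (Lcap L n) u x -> fiber Itop L u x.
Proof. by move=> [Hx [HL _]]; split=> //; apply: nonneg_In_Itop Hx. Qed.

Lemma fiber_down n (L : vec d c -> Prop) u x :
  fiber Itop L u x -> inZJ (In n) u -> inZJ (In n) x ->
  fiber (In n) (Lcap L n) u x.
Proof.
move=> [[_ Hx] HL] Hu Hx'; split; first by split.
by split=> //; apply: inZJ_sub.
Qed.

Lemma nonneg_down n u : nonnegJ Itop u -> inZJ (In n) u -> nonnegJ (In n) u.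
Proof. by move=> [_ H] ?; split. Qed.

Lemma pmB_up (Bs : nat -> vec d c -> Prop) n x y :
  (0 < n)%N -> pmB (Bs n) x y -> pmB (bigunion Bs) x y.
Proof. by move=> n0 [H|H]; [left|right]; exists n. Qed.

Lemma term_order_down n (prec : vec d c -> vec d c -> Prop) : term_order Itop prec -> term_order (In n) prec.
Proof.
move=> [H1 [H2 [H3 [H4 H5]]]].
have U := @nonneg_In_Itop n.
split; first by move=> u /U; apply: H1.
split; first by move=> u v w /U ? /U ? /U ?; apply: H2.
split; first by move=> u v /U ? /U ?; apply: H3.
split; last by move=> u v w /U ? /U ? /U ?; apply: H5.
apply: (Inclusion.wf_incl _ _ _ _ H4) => u v [Hu [Hv Hp]].
by split; [exact: U Hu|split; [exact: U Hv|]].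
Qed.
End H.

Lemma groeb_lemma d c (L : vec d c -> Prop) prec (Bs : nat -> vec d c -> Prop) :
  (forall n, (0 < n)%N -> groebner_basis (In n) (Lcap L n) prec (Bs n)) ->
  groebner_basis Itop L prec (bigunion Bs).
Proof.
move=> HB; split.
- by move=> b [n [n0 Hb]]; exact: ((HB n n0).1 b Hb).1.
- move=> u Hu m Hm Hmin.
  have [n [n0 [Hun Hmn]]] := bound2 Hu.1 Hm.1.1.
  have Hu' := nonneg_down Hu Hun.
  have Hm' := fiber_down Hm Hun Hmn.
  have Hmin' : forall v, fiber (In n) (Lcap L n) u v -> ~ prec v m.
    by move=> v /fiber_up; apply: Hmin.
  apply: crt_mono ((HB n n0).2 u Hu' m Hm' Hmin') => x y [Hx [Hy [Hp Hpr]]].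
  split; first exact: fiber_up Hx.
  split; first exact: fiber_up Hy.
  by split; first exact: pmB_up Hp.
Qed.

Theorem proposition2p7 (d c : nat) (hd : (0 < d)%N) (hc : (0 < c)%N)
  (L : vec d c -> Prop) (hL : is_lattice Itop L) :
  (* (i) generating sets *)
  (forall Bs : nat -> vec d c -> Prop,
     (forall n, (0 < n)%N -> generating_set (Lcap L n) (Bs n)) ->
     generating_set L (bigunion Bs)) /\
  (* (i) Markov bases *)
  (forall Bs : nat -> vec d c -> Prop,
     (forall n, (0 < n)%N -> markov_basis (In n) (Lcap L n) (Bs n)) ->
     markov_basis Itop L (bigunion Bs)) /\
  (* (i) universal Groebner bases *)
  (forall Bs : nat -> vec d c -> Prop,
     (forall n, (0 < n)%N -> universal_groebner_basis (In n) (Lcap L n) (Bs n)) ->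
     universal_groebner_basis Itop L (bigunion Bs)) /\
  (* (i) Graver bases *)
  (forall Bs : nat -> vec d c -> Prop,
     (forall n, (0 < n)%N -> graver_basis (Lcap L n) (Bs n)) ->
     graver_basis L (bigunion Bs)) /\
  (* (i) Groebner bases w.r.t. a fixed term order and its restrictions *)
  (forall prec : vec d c -> vec d c -> Prop, term_order Itop prec ->
   forall Bs : nat -> vec d c -> Prop,
     (forall n, (0 < n)%N -> groebner_basis (In n) (Lcap L n) prec (Bs n)) ->
     groebner_basis Itop L prec (bigunion Bs)) /\
  (* (ii) *)
  (forall G : vec d c -> Prop, graver_basis L G ->
   forall n, (0 < n)%N ->
     graver_basis (Lcap L n) (fun v => G v /\ inZJ (In n) v)).
Proof.
have [_ [_ LZ]] := hL.
split.
  move=> Bs HB; split.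
  - by move=> b [n [n0 Hb]]; exact: ((HB n n0).1 b Hb).1.
  - move=> v Lv; have [n [n0 Hn]] := bound (LZ v Lv).
    have : zspan (Bs n) v by apply: (HB n n0).2; split.
    elim=> [|w b _ IH Hb|w b _ IH Hb]; first exact: zspan0.
    + by apply: zspan_add IH _; exists n.
    + by apply: zspan_sub IH _; exists n.
split.
  move=> Bs HB; split.
  - by move=> b [n [n0 Hb]]; exact: ((HB n n0).1 b Hb).1.
  - move=> u Hu v w Hv Hw.
    have [n [n0 [Hun [Hvn Hwn]]]] := bound3 Hu.1 Hv.1.1 Hw.1.1.
    have Hu' := nonneg_down Hu Hun.
    apply: crt_mono ((HB n n0).2 u Hu' v w (fiber_down Hv Hun Hvn) (fiber_down Hw Hun Hwn)).
    move=> x y [Hx [Hy Hp]].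
    split; first exact: fiber_up Hx.
    split; first exact: fiber_up Hy.
    exact: pmB_up Hp.
split.
  move=> Bs HB; split.
  - by move=> b [n [n0 Hb]]; exact: ((HB n n0).1 b Hb).1.
  - move=> prec Hprec; apply: groeb_lemma => n n0.
    exact: (HB n n0).2 _ (term_order_down n Hprec).
split.
  move=> Bs HB v; split.
  - move=> [n [n0 /(HB n n0) [[Lv Hvn] [nz Hmin]]]].
    split=> //; split=> // u Lu nzu cuv.
    by apply: Hmin => //; split=> //; apply: conf_inZJ cuv Hvn.
  - move=> [Lv [nz Hmin]].
    have [n [n0 Hn]] := bound (LZ v Lv).
    exists n; split=> //; apply/(HB n n0); split; first by split.
    by split=> // u [Lu _] nzu cuv; apply: Hmin.
split.
  by move=> prec _ Bs HB; apply: groeb_lemma.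
move=> G HG n n0 v; split.
- move=> [/HG [Lv [nz Hmin]] Hn].
  split; first by split.
  by split=> // u [Lu _] nzu cuv; apply: Hmin.
- move=> [[Lv Hvn] [nz Hmin]]; split=> //.
  apply/HG; split=> //; split=> // u Lu nzu cuv.
  by apply: Hmin => //; split=> //; apply: conf_inZJ cuv Hvn.
Qed.
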